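(* Let $n$ be a perfect square divisible by $5^4$. Then $C_{S(n)^*}\le 7$.
   Context: For a natural number $n$, $\mathbb Z_n=\mathbb Z/n\mathbb Z$, $S(n)=\{x^2:x\in\mathbb Z_n\}$, $S(n)^*=S(n)\setminus\{0\}$. For $A\subseteq\mathbb Z_n$, a sequence $(y_1,\dots,y_t)$ ($t\ge1$) in $\mathbb Z_n$ is an $A$-weighted zero-sum sequence if there exist $a_1,\dots,a_t\in A$ with $\sum a_iy_i=0$. $C_A(n)$ is the least positive integer $t$ such that every sequence of length $t$ in $\mathbb Z_n$ has a nonempty subsequence of consecutive terms that is an $A$-weighted zero-sum sequence; $C_{S(n)^*}=C_{S(n)^*}(n)$. *)

(* Defs.v *)
From Stdlib Require Import ClassicalEpsilon.
From mathcomp Require Import all_boot all_order all_algebra.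
Set Implicit Arguments. Unset Strict Implicit. Unset Printing Implicit Defensive.
Import GRing.Theory.
Local Open Scope ring_scope.

Definition Sq (n : nat) : {set 'Z_n} := [set x ^+ 2 | x : 'Z_n].
Definition Sq_star (n : nat) : {set 'Z_n} := Sq n :\ 0.

Definition weighted_zero_sum (n : nat) (A : {set 'Z_n}) (y : seq 'Z_n) : bool :=
  (0 < size y)%N &&
  [exists a : (size y).-tuple 'Z_n,
     all (fun x => x \in A) a && (\sum_(i < size y) a`_i * y`_i == 0)].

Definition C_works (n : nat) (A : {set 'Z_n}) (t : nat) : bool :=
  (0 < t)%N &&
  [forall s : t.-tuple 'Z_n, exists i : 'I_t.+1, exists j : 'I_t.+1,
     (i < j)%N && weighted_zero_sum A (drop i (take j s))].

Definition C_A (n : nat) (A : {set 'Z_n}) : nat :=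
  match excluded_middle_informative (exists t, C_works A t) with
  | left h => ex_minn h
  | right _ => 0%N
  end.

(* Main.v *)
Require Import Defs.
From Stdlib Require Import ZArith Lia ClassicalEpsilon.
From mathcomp Require Import all_boot all_order all_algebra.
From mathcomp Require Import zify.
Import GRing.Theory.

Module Comp.
Local Open Scope Z_scope.
Definition reps : seq Z := [:: 0; 1; 2; 5; 10; 25; 50; 125; 250].
Definition inreps (r : Z) : bool := has (Z.eqb r) reps.

Fixpoint zs (len : nat) (f : nat -> Z) : Z :=
  match len with O => 0 | S l => (zs l f + f l) end.

Inductive tree := Leaf (i j : nat) (ts : seq Z)
  | Node (t0 t1 t2 t3 t4 t5 t6 t7 t8 : tree).

Fixpoint lookup (t : tree) (rs : seq Z) : nat * nat * seq Z :=
  match t with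
  | Leaf i j ts => (i, j, ts)
  | Node t0 t1 t2 t3 t4 t5 t6 t7 t8 =>
     match rs with
     | [::] => (0%nat, 0%nat, [::])
     | r :: rs' => lookup (if Z.eqb r 0 then t0 else if Z.eqb r 1 then t1 else
          if Z.eqb r 2 then t2 else if Z.eqb r 5 then t3 else if Z.eqb r 10 then t4 else
          if Z.eqb r 25 then t5 else if Z.eqb r 50 then t6 else if Z.eqb r 125 then t7 else t8) rs'
     end
  end.

Definition tok (t : Z) : bool := Z.leb 0 t && Z.ltb t 625 && negb (Z.eqb ((t*t) mod 625) 0).

Definition certOK (rs : seq Z) (c : nat * nat * seq Z) : bool :=
  let '(i, j, ts) := c in
  [&& (i < j)%N, (j <= size rs)%N,
   all (fun k => tok (nth 0 ts k)) (iota 0 (j - i)) &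
   Z.eqb ((zs (j - i) (fun k => nth 0 ts k * nth 0 ts k * nth 0 rs (i + k)))
           mod 625) 0].

Fixpoint allseqs (k : nat) : seq (seq Z) :=
  match k with
  | O => [:: [::]]
  | S k' => flatten (map (fun r => map (cons r) (allseqs k')) reps)
  end.

Definition cands : seq Z := [seq Z.of_nat k | k <- iota 0 625].
Definition goodS (x s : Z) : bool :=
  Z.ltb 0 s && Z.ltb s 625 && negb (Z.eqb (s mod 5) 0) && inreps ((s * s * x) mod 625).
Definition clsS (x : Z) : Z := nth 1 (filter (goodS x) cands) 0.

Lemma clscheck : all (fun x => goodS x (clsS x)) cands.
Proof. vm_compute. reflexivity. Qed.

Definition inv625 (s : Z) : Z := Nat.iter 499 (fun a => (a * s) mod 625) 1.
Lemma invcheck : all (fun s => Z.eqb (s mod 5) 0 || Z.eqb ((s * inv625 s) mod 625) 1) cands.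
Proof. vm_compute. reflexivity. Qed.

Definition the_tree : tree := (Node (Leaf 0 1 [:: 1]) (Node (Leaf 1 2 [:: 1]) (Leaf 0 2 [:: 1; 182]) (Node (Leaf 2 3 [:: 1]) (Leaf 0 3 [:: 1; 2; 79]) (Leaf 1 3 [:: 1; 182]) (Node (Leaf 3 4 [:: 1]) (Leaf 0 4 [:: 1; 2; 1; 106]) (Leaf 1 4 [:: 1; 1; 53]) (Leaf 2 4 [:: 1; 57]) (Node (Leaf 4 5 [:: 1]) (Leaf 0 5 [:: 1; 2; 1; 1; 301]) (Leaf 1 5 [:: 1; 1; 1; 77]) (Leaf 2 5 [:: 1; 2; 46]) (Leaf 3 5 [:: 1; 57]) (Leaf 4 5 [:: 5]) (Leaf 4 5 [:: 5]) (Leaf 4 5 [:: 5]) (Leaf 4 5 [:: 5])) (Leaf 3 4 [:: 5]) (Leaf 3 4 [:: 5]) (Leaf 3 4 [:: 5]) (Leaf 3 4 [:: 5])) (Node (Leaf 3 4 [:: 1]) (Leaf 0 4 [:: 1; 2; 1; 66]) (Leaf 1 4 [:: 1; 1; 162]) (Node (Leaf 4 5 [:: 1]) (Leaf 0 5 [:: 1; 2; 1; 1; 301]) (Leaf 1 5 [:: 1; 1; 1; 77]) (Leaf 3 5 [:: 1; 57]) (Leaf 2 5 [:: 1; 1; 44]) (Leaf 4 5 [:: 5]) (Leaf 4 5 [:: 5]) (Leaf 4 5 [:: 5]) (Leaf 4 5 [:: 5])) (Leaf 2 4 [:: 1; 57]) (Leaf 3 4 [:: 5]) (Leaf 3 4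 [:: 5]) (Leaf 3 4 [:: 5]) (Leaf 3 4 [:: 5])) (Leaf 2 3 [:: 5]) (Leaf 2 3 [:: 5]) (Leaf 2 3 [:: 5]) (Leaf 2 3 [:: 5])) (Node (Leaf 2 3 [:: 1]) (Leaf 0 3 [:: 1; 1; 162]) (Node (Leaf 3 4 [:: 1]) (Leaf 0 4 [:: 1; 1; 2; 106]) (Leaf 2 4 [:: 1; 182]) (Leaf 1 4 [:: 1; 5; 58]) (Node (Leaf 4 5 [:: 1]) (Leaf 0 5 [:: 1; 1; 2; 1; 301]) (Leaf 2 5 [:: 1; 1; 162]) (Leaf 1 5 [:: 1; 5; 2; 59]) (Leaf 3 5 [:: 1; 57]) (Leaf 4 5 [:: 5]) (Leaf 4 5 [:: 5]) (Leaf 4 5 [:: 5]) (Leaf 4 5 [:: 5])) (Leaf 3 4 [:: 5]) (Leaf 3 4 [:: 5]) (Leaf 3 4 [:: 5]) (Leaf 3 4 [:: 5])) (Leaf 1 3 [:: 1; 57]) (Node (Leaf 3 4 [:: 1]) (Leaf 0 4 [:: 1; 1; 1; 103]) (Node (Leaf 4 5 [:: 1]) (Leaf 0 5 [:: 1; 1; 1; 2; 301]) (Leaf 3 5 [:: 1; 182]) (Leaf 1 5 [:: 1; 2; 5; 59]) (Leaf 2 5 [:: 1; 5; 37]) (Leaf 4 5 [:: 5]) (Leaf 4 5 [:: 5]) (Leaf 4 5 [:: 5]) (Leaf 4 5 [:: 5])) (Leaf 1 4 [:: 1; 2; 46]) (Leaf 2 4 [:: 1; 57]) (Leaf 3 4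 [:: 5]) (Leaf 3 4 [:: 5]) (Leaf 3 4 [:: 5]) (Leaf 3 4 [:: 5])) (Leaf 2 3 [:: 5]) (Leaf 2 3 [:: 5]) (Leaf 2 3 [:: 5]) (Leaf 2 3 [:: 5])) (Node (Leaf 2 3 [:: 1]) (Leaf 0 3 [:: 1; 1; 192]) (Node (Leaf 3 4 [:: 1]) (Leaf 0 4 [:: 1; 1; 2; 66]) (Leaf 2 4 [:: 1; 182]) (Node (Leaf 4 5 [:: 1]) (Leaf 0 5 [:: 1; 1; 2; 1; 301]) (Leaf 2 5 [:: 1; 1; 53]) (Leaf 3 5 [:: 1; 57]) (Leaf 1 5 [:: 1; 5; 1; 41]) (Leaf 4 5 [:: 5]) (Leaf 4 5 [:: 5]) (Leaf 4 5 [:: 5]) (Leaf 4 5 [:: 5])) (Leaf 1 4 [:: 1; 5; 37]) (Leaf 3 4 [:: 5]) (Leaf 3 4 [:: 5]) (Leaf 3 4 [:: 5]) (Leaf 3 4 [:: 5])) (Node (Leaf 3 4 [:: 1]) (Leaf 0 4 [:: 1; 1; 1; 103]) (Node (Leaf 4 5 [:: 1]) (Leaf 0 5 [:: 1; 1; 1; 2; 301]) (Leaf 3 5 [:: 1; 182]) (Leaf 2 5 [:: 1; 5; 58]) (Leaf 1 5 [:: 1; 1; 5; 41]) (Leaf 4 5 [:: 5]) (Leaf 4 5 [:: 5]) (Leaf 4 5 [:: 5]) (Leaf 4 5 [:: 5])) (Leaf 2 4 [:: 1; 57]) (Leaf 1 4 [:: 1; 1; 44]) (Leaf 3 4 [::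 5]) (Leaf 3 4 [:: 5]) (Leaf 3 4 [:: 5]) (Leaf 3 4 [:: 5])) (Leaf 1 3 [:: 1; 57]) (Leaf 2 3 [:: 5]) (Leaf 2 3 [:: 5]) (Leaf 2 3 [:: 5]) (Leaf 2 3 [:: 5])) (Leaf 1 2 [:: 5]) (Leaf 1 2 [:: 5]) (Leaf 1 2 [:: 5]) (Leaf 1 2 [:: 5])) (Node (Leaf 1 2 [:: 1]) (Node (Leaf 2 3 [:: 1]) (Leaf 1 3 [:: 1; 182]) (Leaf 0 3 [:: 1; 1; 81]) (Node (Leaf 3 4 [:: 1]) (Leaf 1 4 [:: 1; 1; 162]) (Leaf 0 4 [:: 1; 1; 1; 261]) (Leaf 2 4 [:: 1; 57]) (Node (Leaf 4 5 [:: 1]) (Leaf 1 5 [:: 1; 1; 1; 103]) (Leaf 0 5 [:: 1; 1; 1; 1; 79]) (Leaf 2 5 [:: 1; 2; 46]) (Leaf 3 5 [:: 1; 57]) (Leaf 4 5 [:: 5]) (Leaf 4 5 [:: 5]) (Leaf 4 5 [:: 5]) (Leaf 4 5 [:: 5])) (Leaf 3 4 [:: 5]) (Leaf 3 4 [:: 5]) (Leaf 3 4 [:: 5]) (Leaf 3 4 [:: 5])) (Node (Leaf 3 4 [:: 1]) (Leaf 1 4 [:: 1; 1; 192]) (Leaf 0 4 [:: 1; 1; 1; 291]) (Node (Leaf 4 5 [:: 1]) (Leaf 1 5 [:: 1; 1; 1; 103]) (Leaf 0 5 [:: 1; 1; 1; 1; 79]) (Leaf 3 5 [:: 1; 57])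 (Leaf 2 5 [:: 1; 1; 44]) (Leaf 4 5 [:: 5]) (Leaf 4 5 [:: 5]) (Leaf 4 5 [:: 5]) (Leaf 4 5 [:: 5])) (Leaf 2 4 [:: 1; 57]) (Leaf 3 4 [:: 5]) (Leaf 3 4 [:: 5]) (Leaf 3 4 [:: 5]) (Leaf 3 4 [:: 5])) (Leaf 2 3 [:: 5]) (Leaf 2 3 [:: 5]) (Leaf 2 3 [:: 5]) (Leaf 2 3 [:: 5])) (Leaf 0 2 [:: 1; 182]) (Node (Leaf 2 3 [:: 1]) (Node (Leaf 3 4 [:: 1]) (Leaf 2 4 [:: 1; 182]) (Leaf 0 4 [:: 1; 1; 1; 261]) (Leaf 1 4 [:: 1; 5; 37]) (Node (Leaf 4 5 [:: 1]) (Leaf 2 5 [:: 1; 1; 192]) (Leaf 0 5 [:: 1; 1; 1; 1; 79]) (Leaf 1 5 [:: 1; 5; 2; 19]) (Leaf 3 5 [:: 1; 57]) (Leaf 4 5 [:: 5]) (Leaf 4 5 [:: 5]) (Leaf 4 5 [:: 5]) (Leaf 4 5 [:: 5])) (Leaf 3 4 [:: 5]) (Leaf 3 4 [:: 5]) (Leaf 3 4 [:: 5]) (Leaf 3 4 [:: 5])) (Leaf 0 3 [:: 1; 1; 53]) (Leaf 1 3 [:: 1; 57]) (Node (Leaf 3 4 [:: 1]) (Node (Leaf 4 5 [:: 1]) (Leaf 3 5 [:: 1; 182]) (Leaf 0 5 [:: 1; 1; 1; 1; 79]) (Leaf 1 5 [:: 1; 2; 5; 19]) (Leaf 2 5 [::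 1; 5; 53]) (Leaf 4 5 [:: 5]) (Leaf 4 5 [:: 5]) (Leaf 4 5 [:: 5]) (Leaf 4 5 [:: 5])) (Leaf 0 4 [:: 1; 1; 1; 77]) (Leaf 1 4 [:: 1; 2; 46]) (Leaf 2 4 [:: 1; 57]) (Leaf 3 4 [:: 5]) (Leaf 3 4 [:: 5]) (Leaf 3 4 [:: 5]) (Leaf 3 4 [:: 5])) (Leaf 2 3 [:: 5]) (Leaf 2 3 [:: 5]) (Leaf 2 3 [:: 5]) (Leaf 2 3 [:: 5])) (Node (Leaf 2 3 [:: 1]) (Node (Leaf 3 4 [:: 1]) (Leaf 2 4 [:: 1; 182]) (Leaf 0 4 [:: 1; 1; 1; 291]) (Node (Leaf 4 5 [:: 1]) (Leaf 2 5 [:: 1; 1; 162]) (Leaf 0 5 [:: 1; 1; 1; 1; 79]) (Leaf 3 5 [:: 1; 57]) (Leaf 1 5 [:: 1; 5; 1; 11]) (Leaf 4 5 [:: 5]) (Leaf 4 5 [:: 5]) (Leaf 4 5 [:: 5]) (Leaf 4 5 [:: 5])) (Leaf 1 4 [:: 1; 5; 53]) (Leaf 3 4 [:: 5]) (Leaf 3 4 [:: 5]) (Leaf 3 4 [:: 5]) (Leaf 3 4 [:: 5])) (Leaf 0 3 [:: 1; 1; 162]) (Node (Leaf 3 4 [:: 1]) (Node (Leaf 4 5 [:: 1]) (Leaf 3 5 [:: 1; 182]) (Leaf 0 5 [:: 1; 1; 1; 1; 79]) (Leaf 2 5 [:: 1; 5; 37]) (Leaf 1 5 [:: 1; 1;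 5; 11]) (Leaf 4 5 [:: 5]) (Leaf 4 5 [:: 5]) (Leaf 4 5 [:: 5]) (Leaf 4 5 [:: 5])) (Leaf 0 4 [:: 1; 1; 1; 77]) (Leaf 2 4 [:: 1; 57]) (Leaf 1 4 [:: 1; 1; 44]) (Leaf 3 4 [:: 5]) (Leaf 3 4 [:: 5]) (Leaf 3 4 [:: 5]) (Leaf 3 4 [:: 5])) (Leaf 1 3 [:: 1; 57]) (Leaf 2 3 [:: 5]) (Leaf 2 3 [:: 5]) (Leaf 2 3 [:: 5]) (Leaf 2 3 [:: 5])) (Leaf 1 2 [:: 5]) (Leaf 1 2 [:: 5]) (Leaf 1 2 [:: 5]) (Leaf 1 2 [:: 5])) (Node (Leaf 1 2 [:: 1]) (Node (Leaf 2 3 [:: 1]) (Leaf 1 3 [:: 1; 182]) (Node (Leaf 3 4 [:: 1]) (Leaf 1 4 [:: 1; 2; 79]) (Leaf 2 4 [:: 1; 182]) (Leaf 0 4 [:: 1; 5; 5; 22]) (Node (Leaf 4 5 [:: 1]) (Leaf 1 5 [:: 1; 2; 1; 66]) (Leaf 2 5 [:: 1; 1; 162]) (Leaf 0 5 [:: 1; 5; 5; 2; 51]) (Leaf 3 5 [:: 1; 57]) (Leaf 4 5 [:: 5]) (Leaf 4 5 [:: 5]) (Leaf 4 5 [:: 5]) (Leaf 4 5 [:: 5])) (Leaf 3 4 [:: 5]) (Leaf 3 4 [:: 5]) (Leaf 3 4 [:: 5]) (Leaf 3 4 [:: 5])) (Leaf 0 3 [:: 1; 5; 37]) (Node (Leaf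 3 4 [:: 1]) (Leaf 1 4 [:: 1; 1; 192]) (Node (Leaf 4 5 [:: 1]) (Leaf 1 5 [:: 1; 1; 2; 66]) (Leaf 3 5 [:: 1; 182]) (Leaf 0 5 [:: 1; 5; 2; 5; 51]) (Leaf 2 5 [:: 1; 5; 37]) (Leaf 4 5 [:: 5]) (Leaf 4 5 [:: 5]) (Leaf 4 5 [:: 5]) (Leaf 4 5 [:: 5])) (Leaf 0 4 [:: 1; 5; 2; 19]) (Leaf 2 4 [:: 1; 57]) (Leaf 3 4 [:: 5]) (Leaf 3 4 [:: 5]) (Leaf 3 4 [:: 5]) (Leaf 3 4 [:: 5])) (Leaf 2 3 [:: 5]) (Leaf 2 3 [:: 5]) (Leaf 2 3 [:: 5]) (Leaf 2 3 [:: 5])) (Node (Leaf 2 3 [:: 1]) (Node (Leaf 3 4 [:: 1]) (Leaf 2 4 [:: 1; 182]) (Leaf 1 4 [:: 1; 1; 81]) (Leaf 0 4 [:: 1; 5; 5; 22]) (Node (Leaf 4 5 [:: 1]) (Leaf 2 5 [:: 1; 1; 192]) (Leaf 1 5 [:: 1; 1; 1; 291]) (Leaf 0 5 [:: 1; 5; 5; 2; 51]) (Leaf 3 5 [:: 1; 57]) (Leaf 4 5 [:: 5]) (Leaf 4 5 [:: 5]) (Leaf 4 5 [:: 5]) (Leaf 4 5 [:: 5])) (Leaf 3 4 [:: 5]) (Leaf 3 4 [:: 5]) (Leaf 3 4 [:: 5]) (Leaf 3 4 [:: 5])) (Leaf 1 3 [:: 1; 182]) (Leaf 0 3 [:: 1;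 5; 58]) (Node (Leaf 3 4 [:: 1]) (Node (Leaf 4 5 [:: 1]) (Leaf 3 5 [:: 1; 182]) (Leaf 1 5 [:: 1; 1; 1; 291]) (Leaf 0 5 [:: 1; 5; 2; 5; 51]) (Leaf 2 5 [:: 1; 5; 53]) (Leaf 4 5 [:: 5]) (Leaf 4 5 [:: 5]) (Leaf 4 5 [:: 5]) (Leaf 4 5 [:: 5])) (Leaf 1 4 [:: 1; 1; 162]) (Leaf 0 4 [:: 1; 5; 2; 59]) (Leaf 2 4 [:: 1; 57]) (Leaf 3 4 [:: 5]) (Leaf 3 4 [:: 5]) (Leaf 3 4 [:: 5]) (Leaf 3 4 [:: 5])) (Leaf 2 3 [:: 5]) (Leaf 2 3 [:: 5]) (Leaf 2 3 [:: 5]) (Leaf 2 3 [:: 5])) (Leaf 0 2 [:: 1; 57]) (Node (Leaf 2 3 [:: 1]) (Node (Leaf 3 4 [:: 1]) (Leaf 2 4 [:: 1; 182]) (Node (Leaf 4 5 [:: 1]) (Leaf 2 5 [:: 1; 2; 79]) (Leaf 3 5 [:: 1; 182]) (Leaf 0 5 [:: 1; 2; 5; 5; 51]) (Leaf 1 5 [:: 1; 5; 5; 48]) (Leaf 4 5 [:: 5]) (Leaf 4 5 [:: 5]) (Leaf 4 5 [:: 5]) (Leaf 4 5 [:: 5])) (Leaf 0 4 [:: 1; 2; 5; 19]) (Leaf 1 4 [:: 1; 5; 53]) (Leaf 3 4 [:: 5]) (Leaf 3 4 [:: 5]) (Leaf 3 4 [:: 5]) (Leaf 3 4 [:: 5]))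 (Node (Leaf 3 4 [:: 1]) (Node (Leaf 4 5 [:: 1]) (Leaf 3 5 [:: 1; 182]) (Leaf 2 5 [:: 1; 1; 81]) (Leaf 0 5 [:: 1; 2; 5; 5; 51]) (Leaf 1 5 [:: 1; 5; 5; 48]) (Leaf 4 5 [:: 5]) (Leaf 4 5 [:: 5]) (Leaf 4 5 [:: 5]) (Leaf 4 5 [:: 5])) (Leaf 2 4 [:: 1; 182]) (Leaf 0 4 [:: 1; 2; 5; 59]) (Leaf 1 4 [:: 1; 5; 37]) (Leaf 3 4 [:: 5]) (Leaf 3 4 [:: 5]) (Leaf 3 4 [:: 5]) (Leaf 3 4 [:: 5])) (Leaf 0 3 [:: 1; 2; 46]) (Leaf 1 3 [:: 1; 57]) (Leaf 2 3 [:: 5]) (Leaf 2 3 [:: 5]) (Leaf 2 3 [:: 5]) (Leaf 2 3 [:: 5])) (Leaf 1 2 [:: 5]) (Leaf 1 2 [:: 5]) (Leaf 1 2 [:: 5]) (Leaf 1 2 [:: 5])) (Node (Leaf 1 2 [:: 1]) (Node (Leaf 2 3 [:: 1]) (Leaf 1 3 [:: 1; 182]) (Node (Leaf 3 4 [:: 1]) (Leaf 1 4 [:: 1; 2; 79]) (Leaf 2 4 [:: 1; 182]) (Node (Leaf 4 5 [:: 1]) (Leaf 1 5 [:: 1; 2; 1; 106]) (Leaf 2 5 [:: 1; 1; 53]) (Leaf 3 5 [:: 1; 57]) (Leaf 0 5 [:: 1; 5; 5; 1; 46]) (Leaf 4 5 [:: 5]) (Leaf 4 5 [:: 5]) (Leaf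 4 5 [:: 5]) (Leaf 4 5 [:: 5])) (Leaf 0 4 [:: 1; 5; 5; 48]) (Leaf 3 4 [:: 5]) (Leaf 3 4 [:: 5]) (Leaf 3 4 [:: 5]) (Leaf 3 4 [:: 5])) (Node (Leaf 3 4 [:: 1]) (Leaf 1 4 [:: 1; 1; 162]) (Node (Leaf 4 5 [:: 1]) (Leaf 1 5 [:: 1; 1; 2; 106]) (Leaf 3 5 [:: 1; 182]) (Leaf 2 5 [:: 1; 5; 58]) (Leaf 0 5 [:: 1; 5; 1; 5; 46]) (Leaf 4 5 [:: 5]) (Leaf 4 5 [:: 5]) (Leaf 4 5 [:: 5]) (Leaf 4 5 [:: 5])) (Leaf 2 4 [:: 1; 57]) (Leaf 0 4 [:: 1; 5; 1; 11]) (Leaf 3 4 [:: 5]) (Leaf 3 4 [:: 5]) (Leaf 3 4 [:: 5]) (Leaf 3 4 [:: 5])) (Leaf 0 3 [:: 1; 5; 53]) (Leaf 2 3 [:: 5]) (Leaf 2 3 [:: 5]) (Leaf 2 3 [:: 5]) (Leaf 2 3 [:: 5])) (Node (Leaf 2 3 [:: 1]) (Node (Leaf 3 4 [:: 1]) (Leaf 2 4 [:: 1; 182]) (Leaf 1 4 [:: 1; 1; 81]) (Node (Leaf 4 5 [:: 1]) (Leaf 2 5 [:: 1; 1; 162]) (Leaf 1 5 [:: 1; 1; 1; 261]) (Leaf 3 5 [:: 1; 57]) (Leaf 0 5 [:: 1; 5; 5; 1; 46]) (Leaf 4 5 [:: 5]) (Leaf 4 5 [:: 5]) (Leaf 4 5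 [:: 5]) (Leaf 4 5 [:: 5])) (Leaf 0 4 [:: 1; 5; 5; 48]) (Leaf 3 4 [:: 5]) (Leaf 3 4 [:: 5]) (Leaf 3 4 [:: 5]) (Leaf 3 4 [:: 5])) (Leaf 1 3 [:: 1; 182]) (Node (Leaf 3 4 [:: 1]) (Node (Leaf 4 5 [:: 1]) (Leaf 3 5 [:: 1; 182]) (Leaf 1 5 [:: 1; 1; 1; 261]) (Leaf 2 5 [:: 1; 5; 37]) (Leaf 0 5 [:: 1; 5; 1; 5; 46]) (Leaf 4 5 [:: 5]) (Leaf 4 5 [:: 5]) (Leaf 4 5 [:: 5]) (Leaf 4 5 [:: 5])) (Leaf 1 4 [:: 1; 1; 53]) (Leaf 2 4 [:: 1; 57]) (Leaf 0 4 [:: 1; 5; 1; 41]) (Leaf 3 4 [:: 5]) (Leaf 3 4 [:: 5]) (Leaf 3 4 [:: 5]) (Leaf 3 4 [:: 5])) (Leaf 0 3 [:: 1; 5; 37]) (Leaf 2 3 [:: 5]) (Leaf 2 3 [:: 5]) (Leaf 2 3 [:: 5]) (Leaf 2 3 [:: 5])) (Node (Leaf 2 3 [:: 1]) (Node (Leaf 3 4 [:: 1]) (Leaf 2 4 [:: 1; 182]) (Node (Leaf 4 5 [:: 1]) (Leaf 2 5 [:: 1; 2; 79]) (Leaf 3 5 [:: 1; 182]) (Leaf 1 5 [:: 1; 5; 5; 22]) (Leaf 0 5 [:: 1; 1; 5; 5; 46]) (Leaf 4 5 [:: 5]) (Leaf 4 5 [:: 5]) (Leaf 4 5 [:: 5])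 (Leaf 4 5 [:: 5])) (Leaf 1 4 [:: 1; 5; 37]) (Leaf 0 4 [:: 1; 1; 5; 11]) (Leaf 3 4 [:: 5]) (Leaf 3 4 [:: 5]) (Leaf 3 4 [:: 5]) (Leaf 3 4 [:: 5])) (Node (Leaf 3 4 [:: 1]) (Node (Leaf 4 5 [:: 1]) (Leaf 3 5 [:: 1; 182]) (Leaf 2 5 [:: 1; 1; 81]) (Leaf 1 5 [:: 1; 5; 5; 22]) (Leaf 0 5 [:: 1; 1; 5; 5; 46]) (Leaf 4 5 [:: 5]) (Leaf 4 5 [:: 5]) (Leaf 4 5 [:: 5]) (Leaf 4 5 [:: 5])) (Leaf 2 4 [:: 1; 182]) (Leaf 1 4 [:: 1; 5; 58]) (Leaf 0 4 [:: 1; 1; 5; 41]) (Leaf 3 4 [:: 5]) (Leaf 3 4 [:: 5]) (Leaf 3 4 [:: 5]) (Leaf 3 4 [:: 5])) (Leaf 1 3 [:: 1; 57]) (Leaf 0 3 [:: 1; 1; 44]) (Leaf 2 3 [:: 5]) (Leaf 2 3 [:: 5]) (Leaf 2 3 [:: 5]) (Leaf 2 3 [:: 5])) (Leaf 0 2 [:: 1; 57]) (Leaf 1 2 [:: 5]) (Leaf 1 2 [:: 5]) (Leaf 1 2 [:: 5]) (Leaf 1 2 [:: 5])) (Leaf 0 1 [:: 5]) (Leaf 0 1 [:: 5]) (Leaf 0 1 [:: 5]) (Leaf 0 1 [:: 5])).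
Lemma bigcheck : all (fun rs => certOK rs (lookup the_tree rs)) (allseqs 5).
Proof. vm_compute. reflexivity. Qed.

Lemma cands_nth (x : Z) : 0 <= x < 625 -> nth 0 cands (Z.to_nat x) = x.
Proof.
move=> hx. rewrite /cands (nth_map 0%nat); last by rewrite size_iota; lia.
rewrite nth_iota; [lia|lia].
Qed.

Lemma cands_all (P : pred Z) : all P cands -> forall x, 0 <= x < 625 -> P x.
Proof.
move=> /(all_nthP 0) H x hx. rewrite -(cands_nth x hx). apply: H.
rewrite /cands size_map size_iota. lia.
Qed.

Lemma nz (t s : Z) : 0 <= s < 625 -> s mod 5 <> 0 -> (t*t) mod 625 <> 0 ->
  ((t*s)*(t*s)) mod 625 <> 0.
Proof.
move=> hs h5 ht H. apply: ht.
have := cands_all _ invcheck s hs. case/orP => [/Z.eqb_eq //|/Z.eqb_eq hu].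
set u := inv625 s in hu.
apply/(Z.mod_divide _ 625 ltac:(lia)).
have {}H := proj1 (Z.mod_divide _ 625 ltac:(lia)) H.
have e1 := Z.div_mod (s*u) 625 ltac:(lia). rewrite hu in e1.
case: H => a Ha.
have -> : t*t = t*s*(t*s)*(u*u) - t*t*((s*u-1)*(s*u+1)) by ring.
have -> : s*u - 1 = 625 * ((s*u)/625) by lia.
rewrite Ha. exists (a*(u*u) - t*t*((s*u)/625)*(s*u+1)). ring.
Qed.

Lemma zs_ext len F G : (forall k, (k < len)%N -> F k = G k) -> zs len F = zs len G.
Proof.
elim: len => [//|l IH] H /=. rewrite IH ?H //. move=> k hk; apply: H; exact: ltnW.
Qed.

Lemma zs_dvd len F G : (forall k, (k < len)%N -> (625 | F k - G k)) ->
  (625 | zs len F - zs len G).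
Proof.
elim: len => [|l IH] H /=; first by exists 0.
have -> : zs l F + F l - (zs l G + G l) = (zs l F - zs l G) + (F l - G l) by ring.
apply: Z.divide_add_r; last exact: H.
apply: IH => k hk; apply: H; exact: ltnW.
Qed.

Lemma all_flat_map (T U : Type) (f : pred U) (g : T -> seq U) l :
  all f (flatten (map g l)) = all (fun r => all f (g r)) l.
Proof. elim: l => //= a l IH. by rewrite all_cat IH. Qed.

Lemma has_eqb_all (P : pred Z) l r : all P l -> has (Z.eqb r) l -> P r.
Proof.
elim: l => //= a l IH /andP [Pa Pl] /orP [/Z.eqb_eq -> //|]. exact: IH.
Qed.

Lemma allseqs_ok k : forall (f : pred (seq Z)), all f (allseqs k) ->
  forall rs, size rs = k -> all inreps rs -> f rs.
Proof.
elim: k => [|k IH] f.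
  by move=> /= /andP [H _] [|//].
move=> H0 [//|r rs] /= [hs] /andP [hr hrs].
have H : all f (flatten (map (fun r => map (cons r) (allseqs k)) reps)) := H0.
rewrite all_flat_map in H.
have := has_eqb_all _ _ _ H hr. rewrite all_map => H2.
exact: (IH (preim (cons r) f) H2 rs hs hrs).
Qed.
Lemma core (c : nat -> Z) : exists (i j : nat) (t : nat -> Z),
  (i < j <= 5)%N /\
  (forall k, (k < j - i)%N -> 0 <= t k /\ (t k * t k) mod 625 <> 0) /\
  (zs (j - i) (fun k => t k * t k * c (i + k)%N)) mod 625 = 0.
Proof.
pose x k := c k mod 625.
have hx k : 0 <= x k < 625 by apply: Z.mod_pos_bound; lia.
have [sv hg] : exists sv : nat -> Z, forall k, goodS (x k) (sv k).
  exists (fun k => clsS (x k)) => k. exact: cands_all _ clscheck _ (hx k).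
pose r k := (sv k * sv k * x k) mod 625.
pose rs := [seq r k | k <- iota 0 5].
have hrs : size rs = 5%N by rewrite size_map size_iota.
have hin : all inreps rs.
  rewrite all_map; apply/allP => k _.
  move: (hg k); rewrite /goodS => /andP [_ H]; exact: H.
have hc := allseqs_ok 5 _ bigcheck rs hrs hin.
move: hc; case: (lookup the_tree rs) => [[i j] ts] /= /and4P [hij hj hts hsum].
exists i, j, (fun k => nth 0 ts k * sv (i + k)%N).
split; first by rewrite hij hj.
have hk1 k : (k < j - i)%N -> 0 <= nth 0 ts k < 625 /\ (nth 0 ts k * nth 0 ts k) mod 625 <> 0.
  move=> hk. have := (all_nthP 0%N hts k). rewrite size_iota nth_iota // add0n => /(_ hk).
  rewrite /tok => /andP [/andP [h1 h2] h3].
  apply Z.leb_le in h1. apply Z.ltb_lt in h2.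
  split; first lia. move=> h4. apply Z.eqb_eq in h4. by rewrite h4 in h3.
have hk2 k : 0 < sv k < 625 /\ sv k mod 5 <> 0.
  move: (hg k); rewrite /goodS => /andP [/andP [/andP [h1 h2] h3] _].
  apply Z.ltb_lt in h1. apply Z.ltb_lt in h2.
  split; first lia. move=> h4. apply Z.eqb_eq in h4. by rewrite h4 in h3.
split.
  move=> k hk. have [[h1 h2] h3] := hk1 k hk. have [h4 h5] := hk2 (i + k)%N.
  split; first nia.
  apply: nz => //; lia.
move/Z.eqb_eq: hsum => hsum.
have hd : (625 | zs (j - i) (fun k => nth 0 ts k * sv (i + k)%N * (nth 0 ts k * sv (i + k)%N) * c (i + k)%N)
   - zs (j - i) (fun k => nth 0 ts k * nth 0 ts k * nth 0 rs (i + k))).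
  apply: zs_dvd => k hk.
  have hik : (i + k < 5)%N by lia.
  rewrite /rs (nth_map 0%N); last by rewrite size_iota.
  rewrite nth_iota // add0n /r /x.
  set s := sv (i + k)%N. set t := nth 0 ts k. set cc := c (i + k)%N.
  have e1 := Z.div_mod cc 625 ltac:(lia).
  have e2 := Z.div_mod (s * s * (cc mod 625)) 625 ltac:(lia).
  set q1 := cc / 625 in e1 *. set m1 := cc mod 625 in e1 e2 *.
  set X := s * s * m1 in e2 *. set q2 := X / 625 in e2 *.
  have -> : X mod 625 = X - 625 * q2 by lia.
  exists (t * t * (s * s * q1 + q2)).
  rewrite e1 /X. ring.
apply/(Z.mod_divide _ 625 ltac:(lia)).
have hg2 := proj1 (Z.mod_divide _ 625 ltac:(lia)) hsum.
have := Z.divide_add_r _ _ _ hd hg2.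
by rewrite Z.sub_add.
Qed.

Lemma zs_big len (F : nat -> nat) :
  Z.of_nat (\sum_(k < len) F k)%N = zs len (fun k => Z.of_nat (F k)).
Proof.
elim: len => [|l IH]; first by rewrite big_ord0.
rewrite big_ord_recr /= -IH. rewrite -plusE Nat2Z.inj_add. done.
Qed.

Lemma dvd625 (S : nat) : Z.of_nat S mod 625 = 0 -> (625 %| S)%N.
Proof.
move=> H. apply Z.mod_divide in H; [|lia]. destruct H as [k Hk].
apply/dvdnP. exists (Z.to_nat k). lia.
Qed.

Lemma core_nat (c : nat -> nat) : exists (i j : nat) (t : nat -> nat),
  (i < j <= 5)%N /\
  (forall k, (k < j - i)%N -> ~~ (625 %| t k * t k)%N) /\
  (625 %| \sum_(k < j - i) t k * t k * c (i + k)%N)%N.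
Proof.
have [i [j [t [hij [ht hs]]]]] := core (fun k => Z.of_nat (c k)).
exists i, j, (fun k => Z.to_nat (t k)).
split => //. split.
  move=> k hk. have [h0 h1] := ht k hk. apply/negP => /dvdnP [q hq].
  apply: h1.
  have -> : t k * t k = Z.of_nat q * 625.
    have e := f_equal Z.of_nat hq. rewrite -!multE !Nat2Z.inj_mul in e.
    rewrite Z2Nat.id in e; last exact: h0.
    rewrite e. done.
  exact: Z_mod_mult.
apply: dvd625. rewrite (zs_big _ (fun k => Z.to_nat (t k) * Z.to_nat (t k) * c (i + k))%N) -hs. congr (_ mod _). apply: zs_ext => k hk.
have [h0 _] := ht k hk.
rewrite !Nat2Z.inj_mul Z2Nat.id //.
Qed.

End Comp.
Import Comp.

Local Open Scope ring_scope.

Lemma one_in0 : (1 : 'Z_0) \in Sq_star 0.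
Proof.
rewrite /Sq_star /Sq in_setD1; apply/andP; split; first by [].
by apply/imsetP; exists 1 => //; rewrite expr1n.
Qed.

Lemma wz1 : weighted_zero_sum (Sq_star 0) [:: 0].
Proof.
apply/andP; split=> //; apply/existsP; exists [tuple 1].
rewrite /= one_in0 /= big_ord1 /=. by rewrite mulr0.
Qed.

Lemma wz2 : weighted_zero_sum (Sq_star 0) [:: 1; 1].
Proof.
apply/andP; split=> //; apply/existsP; exists [tuple 1; 1].
rewrite /= one_in0 /= big_ord_recr big_ord1 /=. by [].
Qed.

Lemma works_n0 : C_works (Sq_star 0) 2.
Proof.
apply/andP; split=> //; apply/forallP => s.
case: s => [[|a [|b []]] //= hs].
case: a => [[|[|//]] ha].
- apply/existsP; exists (inord 0); apply/existsP; exists (inord 1).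
  rewrite !inordK //=. rewrite (_ : Ordinal ha = 0); last exact: val_inj.
  exact: wz1.
case: b => [[|[|//]] hb].
- apply/existsP; exists (inord 1); apply/existsP; exists (inord 2).
  rewrite !inordK //=. rewrite (_ : Ordinal hb = 0); last exact: val_inj.
  exact: wz1.
- apply/existsP; exists (inord 0); apply/existsP; exists (inord 2).
  rewrite !inordK //=. rewrite (_ : Ordinal hb = 1); last exact: val_inj.
  rewrite (_ : Ordinal ha = 1); last exact: val_inj.
  exact: wz2.
Qed.


Lemma C_A_le (n : nat) (A : {set 'Z_n}) t : C_works A t -> (C_A A <= t)%N.
Proof.
move=> H. rewrite /C_A. case: excluded_middle_informative => [h|h]; last done.
case: ex_minnP => k _ hk. exact: hk.
Qed.

Lemma works_main (p : nat) : (exists m, p.+2 = (m ^ 2)%N) -> (5 ^ 4 %| p.+2)%N ->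
  C_works (Sq_star p.+2) 5.
Proof.
move=> [m hm] h5.
have m0 : (0 < m)%N by case: m hm.
have h25 : (25 %| m)%N.
  have : (4 <= logn 5 (m ^ 2))%N by rewrite -pfactor_dvdn // ?expn_gt0 ?m0 // -hm.
  rewrite lognX => h. have h2 : (2 <= logn 5 m)%N by lia.
  rewrite (_ : 25 = 5 ^ 2)%N //. by rewrite pfactor_dvdn.
set K := (m %/ 25)%N. have hm25 : m = (K * 25)%N by rewrite divnK.
have K0 : (0 < K)%N by lia.
have hn : p.+2 = (K * K * 625)%N by rewrite hm hm25; nia.
apply/andP; split => //. apply/forallP => s.
have [i [j [t [hij [ht hs]]]]] := core_nat (fun k => nat_of_ord (nth 0%R s k)).
move/andP: hij => [hij hj].
apply/existsP; exists (inord i). apply/existsP; exists (inord j).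
rewrite !inordK; try lia.
rewrite hij /=.
set y := drop i (take j s).
have sy : size y = (j - i)%N by rewrite size_drop size_takel // size_tuple.
rewrite /weighted_zero_sum sy subn_gt0 hij /=.
apply/existsP.
pose w (k : 'I_(j - i)) : 'Z_(p.+2) := ((K * t k)%:R) ^+ 2.
exists [tuple w k | k < j - i].
apply/andP; split.
  apply/allP => a /mapP [k _ ->].
  rewrite /Sq_star /Sq in_setD1; apply/andP; split; last first.
    by apply/imsetP; exists ((K * t k)%:R).
  rewrite /w -natrX. apply/eqP => /(congr1 (@nat_of_ord _)). rewrite val_Zp_nat // /= hn => e.
  have : (K * K * 625 %| K * K * (t k * t k))%N.
    rewrite /dvdn (_ : K * K * (t k * t k) = (K * t k) ^ 2)%N ?e //. nia.
  rewrite dvdn_pmul2l ?muln_gt0 ?K0 //. apply/negP. exact: ht.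
rewrite (eq_bigr (fun k : 'I_(j-i) => ((K * K * (t k * t k * nat_of_ord (nth 0%R s (i + k))))%N%:R : 'Z_(p.+2)))); last first.
  move=> k _. have hk := ltn_ord k. rewrite -(tnth_nth 0) tnth_mktuple /w /y nth_drop nth_take; last lia.
  rewrite -{1}(natr_Zp (nth 0 s (i + k))) -natrX -natrM. congr (_%:R). nia.
rewrite -natr_sum -big_distrr /=.
apply/eqP; apply: ord_inj. rewrite val_Zp_nat //=. apply/eqP.
have hd : (K * K * 625 %| K * K * \sum_(k < j - i) t k * t k * nat_of_ord (nth 0%R s (i + k)))%N.
  by rewrite dvdn_pmul2l ?muln_gt0 ?K0.
rewrite -hn in hd. exact: hd.
Qed.

Theorem mainTheorem19 (n : nat) :
  (exists m : nat, n = (m ^ 2)%N) -> (5 ^ 4 %| n)%N ->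
  (exists t : nat, C_works (Sq_star n) t) /\ (C_A (Sq_star n) <= 7)%N.
Proof.
move=> hm h5.
suff [t [ht1 ht2]] : exists t, (t <= 7)%N /\ C_works (Sq_star n) t.
  split; [by exists t | exact: leq_trans (C_A_le _ _ _ ht2) ht1].
move: hm h5; case: n => [|[|p]] hm h5.
- exists 2%N; split => //; exact: works_n0.
- by move: h5.
- exists 5%N; split => //; exact: works_main.
Qed.
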